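(* Let $m\in\mathbb{N}$ with $m\ge 2$. For all $l\in\mathbb{N}_0$, $t>0$, the function $c^t_{m,l}$ on $\mathbb{RP}^m\times\mathbb{RP}^m$ satisfies $|c^t_{m,l}| \le e^{-l(l+m-1)\frac t2}\,2^7(l+m-2)^{m+1}$, and $c^t_{m,0}=c^t_{m,1}=0$. For all $t>0$ and $[x],[y]\in\mathbb{RP}^m$, $$\Big(\sum_{l=0}^\infty c^t_{m,l}([x],[y])\Big)^2 = \sum_{n=0}^\infty d^t_{m,n}([x],[y]),\qquad \Big(\sum_{l=0}^\infty c^t_{m,l}([x],[y])\Big)^3 = \sum_{k=0}^\infty h^t_{m,k}([x],[y]).$$ For all $n,k\in\mathbb{N}_0$ and $t>0$, $$|d^t_{m,n}| \le e^{-(\frac{n^2}{2}+n(m-1))\frac t2}\,2^{14}(n+m-2)^{2m+3},\qquad |h^t_{m,k}| \le e^{-(\frac{k^2}{3}+k(m-1))\frac t2}\,2^{21}(k+m-2)^{3m+5}$$ on $\mathbb{RP}^m\times\mathbb{RP}^m$. Moreover $d^t_{m,n}=0$ for $n\in\{0,1,2,3\}$ and $h^t_{m,k}=0$ for $k\in\{0,1,2,3,4,5\}$, for all $t>0$.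
   Context: $\mathbb{RP}^m = \{[x]: x\in\mathbb{S}^m\}$, $[x]=\{x,-x\}$, $\mathbb{S}^m\subset\mathbb{R}^{m+1}$ the unit sphere. $C_l^{(m-1)/2}$ is the Gegenbauer polynomial of degree $l$ and parameter $(m-1)/2$. For $l\in\mathbb{N}_0$ and $t>0$, define $c^t_{m,l}([x],[y]) := 0$ if $l$ is odd or $l=0$, and for even $l>0$, $c^t_{m,l}([x],[y]) := e^{-l(l+m-1)\frac t2}\frac{2l+m-1}{m-1}C_l^{(m-1)/2}(\langle x,y\rangle)$ (unit representatives $x,y$). Further, for $n,k\in\mathbb{N}_0$, $d^t_{m,n} := \sum_{l=0}^n c^t_{m,l}c^t_{m,n-l}$ and $h^t_{m,k} := \sum_{n=0}^k d^t_{m,n}c^t_{m,k-n}$ (pointwise in $([x],[y])$). *)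

(* Defs.v *)
From Stdlib Require Import Reals Lra Lia.
From Coquelicot Require Import Coquelicot.
Open Scope R_scope.

(* Points of S^m ⊂ R^(m+1): coordinates x 0, ..., x m (other coordinates ignored). *)
Definition inner (m : nat) (x y : nat -> R) : R := sum_f_R0 (fun i => x i * y i) m.
Definition on_sphere (m : nat) (x : nat -> R) : Prop := inner m x x = 1.

Fixpoint gegen_pair (lam x : R) (n : nat) : R * R :=
  match n with
  | O => (1, 2 * lam * x)
  | S n' =>
      let '(a, b) := gegen_pair lam x n' in
      let k := INR (n' + 2) in
      (b, (2 * x * (k + lam - 1) * b - (k + 2 * lam - 2) * a) / k)
  end.
Definition gegenbauer (n : nat) (lam : R) (x : R) : R := fst (gegen_pair lam x n).

(* c^t_{m,l}([x],[y]) with unit representatives x y *)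
Definition cc (m l : nat) (t : R) (x y : nat -> R) : R :=
  if andb (Nat.even l) (Nat.ltb 0 l) then
    exp (- (INR l * (INR l + INR m - 1)) * t / 2)
    * ((2 * INR l + INR m - 1) / (INR m - 1))
    * gegenbauer l ((INR m - 1) / 2) (inner m x y)
  else 0.

Definition dd (m n : nat) (t : R) (x y : nat -> R) : R :=
  sum_f_R0 (fun l => cc m l t x y * cc m (n - l) t x y) n.

Definition hh (m k : nat) (t : R) (x y : nat -> R) : R :=
  sum_f_R0 (fun n => dd m n t x y * cc m (k - n) t x y) k.

(* Main.v *)
Require Import Defs.
From Stdlib Require Import Reals Lra Lia Psatz Arith.
From Coquelicot Require Import Coquelicot.
Open Scope R_scope.

Fixpoint Tch (x : R) (k : nat) : R :=
  match k with
  | O => 1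
  | S k' => match k' with O => x | S k'' => 2 * x * Tch x k' - Tch x k'' end
  end.

Lemma Tch_SS x k : Tch x (S (S k)) = 2 * x * Tch x (S k) - Tch x k.
Proof. reflexivity. Qed.

Fixpoint aa (lam : R) (p : nat) : R :=
  match p with O => 1 | S p' => aa lam p' * (lam + INR p') / INR (S p') end.
Definition bb lam p := match p with O => 0 | S p' => aa lam p' end.

Lemma aa_rel lam p : INR p * aa lam p = (lam + INR p - 1) * bb lam p.
Proof.
  destruct p as [|p]; simpl bb.
  - simpl. ring.
  - cbn [aa]. rewrite S_INR. field. pose proof (pos_INR p). lra.
Qed.

Definition dst (N M : nat) : nat := ((N - M) + (M - N))%nat.

Definition PP lam x n :=
  sum_f_R0 (fun j => aa lam j * aa lam (n - j) * Tch x (dst n (2 * j))) n.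

Lemma Tch_shift x n j :
  2 * x * Tch x (dst (S n) (2 * j)) = Tch x (dst (S (S n)) (2 * j)) + Tch x (dst n (2 * j)).
Proof.
  destruct (le_lt_dec (2 * j) n) as [h|h].
  - replace (dst (S n) (2*j)) with (S (n - 2*j)) by (unfold dst; lia).
    replace (dst (S (S n)) (2*j)) with (S (S (n - 2*j))) by (unfold dst; lia).
    replace (dst n (2*j)) with (n - 2*j)%nat by (unfold dst; lia).
    rewrite Tch_SS. ring.
  - destruct (Nat.eq_dec (2*j) (S n)) as [e|e].
    + replace (dst (S n) (2*j)) with 0%nat by (unfold dst; lia).
      replace (dst (S (S n)) (2*j)) with 1%nat by (unfold dst; lia).
      replace (dst n (2*j)) with 1%nat by (unfold dst; lia).
      simpl. ring.
    + replace (dst (S n) (2*j)) with (S (2*j - S (S n))) by (unfold dst; lia).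
      replace (dst (S (S n)) (2*j)) with (2*j - S (S n))%nat by (unfold dst; lia).
      replace (dst n (2*j)) with (S (S (2*j - S (S n)))) by (unfold dst; lia).
      rewrite Tch_SS. ring.
Qed.

Lemma sum_lin (u v w z : nat -> R) (c0 al be ga : R) N :
  (forall j, (j <= N)%nat -> c0 * u j = al * v j + be * w j + ga * z j) ->
  c0 * sum_f_R0 u N = al * sum_f_R0 v N + be * sum_f_R0 w N + ga * sum_f_R0 z N.
Proof.
  induction N as [|N IH]; intros H.
  - simpl. apply H. lia.
  - simpl. rewrite Rmult_plus_distr_l, IH, (H (S N)). ring. lia.
    intros j hj; apply H; lia.
Qed.

Lemma alg (p q ap aq bp bq lam F : R) :
  p*ap = (lam+p-1)*bp -> q*aq = (lam+q-1)*bq ->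
  (p+q)*(ap*aq*F) = (p+q+lam-1)*(ap*bq*F) + (p+q+lam-1)*(bp*aq*F)
                    + -(p+q+2*lam-2)*(bp*bq*F).
Proof.
  intros H1 H2.
  set (e1 := p*ap - (lam+p-1)*bp). set (e2 := q*aq - (lam+q-1)*bq).
  assert (E : (p+q)*(ap*aq*F) - ((p+q+lam-1)*(ap*bq*F) + (p+q+lam-1)*(bp*aq*F)
                    + -(p+q+2*lam-2)*(bp*bq*F)) = F*((aq-bq)*e1 + (ap-bp)*e2))
    by (unfold e1, e2; ring).
  assert (e1 = 0) by (unfold e1; lra). assert (e2 = 0) by (unfold e2; lra).
  rewrite H, H0 in E. lra.
Qed.

Lemma PP_rec lam x n :
  INR (S (S n)) * PP lam x (S (S n)) =
  2 * x * (INR (S (S n)) + lam - 1) * PP lam x (S n) - (INR (S (S n)) + 2 * lam - 2) * PP lam x n.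
Proof.
  set (F := fun j => Tch x (dst (S (S n)) (2 * j))).
  assert (X12 : 2 * x * PP lam x (S n) =
     sum_f_R0 (fun j => aa lam j * bb lam (S (S n) - j) * F j) (S (S n)) +
     sum_f_R0 (fun j => bb lam j * aa lam (S (S n) - j) * F j) (S (S n))).
  { unfold PP. rewrite scal_sum.
    rewrite (tech5 (fun j => aa lam j * bb lam (S (S n) - j) * F j)).
    rewrite Nat.sub_diag. simpl (bb lam 0).
    rewrite (decomp_sum (fun j => bb lam j * aa lam (S (S n) - j) * F j)) by lia.
    simpl (bb lam 0). simpl pred.
    rewrite (Rmult_0_r (aa lam (S (S n)))), (Rmult_0_l (F (S (S n)))).
    rewrite (Rmult_0_l (aa lam (S (S n) - 0))), (Rmult_0_l (F 0%nat)).
    rewrite Rplus_0_r, Rplus_0_l.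
    replace (sum_f_R0 (fun j => aa lam j * bb lam (S (S n) - j) * F j) (S n)) with
      (sum_f_R0 (fun j => aa lam j * aa lam (S n - j) * F j) (S n)).
    2:{ apply sum_eq. intros j hj. replace (S (S n) - j)%nat with (S (S n - j)) by lia.
        reflexivity. }
    rewrite <- plus_sum. apply sum_eq. intros j hj.
    simpl (bb lam (S j)). replace (S (S n) - S j)%nat with (S n - j)%nat by lia.
    unfold F. replace (dst (S (S n)) (2 * S j)) with (dst n (2 * j)) by (unfold dst; lia).
    rewrite <- Rmult_plus_distr_l, <- (Tch_shift x n j). ring. }
  assert (X3 : PP lam x n = sum_f_R0 (fun j => bb lam j * bb lam (S (S n) - j) * F j) (S (S n))).
  { rewrite (decomp_sum _ (S (S n))) by lia. simpl pred. simpl (bb lam 0).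
    rewrite tech5. replace (S (S n) - S (S n))%nat with 0%nat by lia. simpl (bb lam 0).
    unfold PP. rewrite (Rmult_0_l (bb lam (S (S n) - 0))), (Rmult_0_l (F 0%nat)), (Rmult_0_r (bb lam (S (S n)))), (Rmult_0_l (F (S (S n)))), Rplus_0_l, Rplus_0_r.
    apply sum_eq. intros j hj. simpl (bb lam (S j)).
    replace (S (S n) - S j)%nat with (S (n - j)) by lia. simpl (bb lam (S (n - j))).
    unfold F. replace (dst (S (S n)) (2 * S j)) with (dst n (2 * j)) by (unfold dst; lia).
    reflexivity. }
  replace (2 * x * (INR (S (S n)) + lam - 1) * PP lam x (S n)) with
     ((INR (S (S n)) + lam - 1) * (2 * x * PP lam x (S n))) by ring.
  rewrite X12, X3, Rmult_plus_distr_l.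
  replace (PP lam x (S (S n))) with
     (sum_f_R0 (fun j => aa lam j * aa lam (S (S n) - j) * F j) (S (S n))) by reflexivity.
  rewrite (sum_lin _ (fun j => aa lam j * bb lam (S (S n) - j) * F j)
     (fun j => bb lam j * aa lam (S (S n) - j) * F j)
     (fun j => bb lam j * bb lam (S (S n) - j) * F j) _
     (INR (S (S n)) + lam - 1) (INR (S (S n)) + lam - 1) (-(INR (S (S n)) + 2 * lam - 2))).
  { ring. }
  intros j hj.
  replace (INR (S (S n))) with (INR j + INR (S (S n) - j)) by (rewrite minus_INR by lia; ring).
  apply alg; apply aa_rel.
Qed.

Lemma gegen_PP lam x n : gegen_pair lam x n = (PP lam x n, PP lam x (S n)).
Proof.
  induction n as [|n IH].
  - unfold PP. simpl. unfold dst; simpl. f_equal; field.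
  - cbn [gegen_pair]. rewrite IH. f_equal.
    pose proof (PP_rec lam x n) as H.
    replace (INR (n + 2)) with (INR (S (S n))) by (f_equal; lia).
    assert (0 < INR (S (S n))) by (apply lt_0_INR; lia).
    apply (Rmult_eq_reg_l (INR (S (S n)))); [|lra].
    rewrite H. field. lra.
Qed.

Lemma aa_nonneg lam p : 0 <= lam -> 0 <= aa lam p.
Proof.
  intros hl. induction p as [|p IH]; cbn [aa]; [lra|].
  apply Rmult_le_pos; [apply Rmult_le_pos; [exact IH|pose proof (pos_INR p); lra]|].
  apply Rlt_le, Rinv_0_lt_compat, lt_0_INR; lia.
Qed.

Lemma Tch_inv x k : Tch x (S k) ^ 2 - 2 * x * Tch x (S k) * Tch x k + Tch x k ^ 2 = 1 - x ^ 2.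
Proof.
  induction k as [|k IH].
  - simpl. ring.
  - rewrite Tch_SS. rewrite <- IH. ring.
Qed.

Lemma Tch_pm x k : x * x = 1 -> Tch x k = x ^ k /\ Tch x (S k) = x ^ S k.
Proof.
  intros hx. induction k as [|k [IH1 IH2]].
  - simpl. split; ring.
  - split; [exact IH2|]. rewrite Tch_SS, IH1, IH2.
    replace (x ^ S (S k)) with (x ^ k * (x * x)) by (simpl; ring).
    rewrite hx. simpl. replace (2 * x * (x * x ^ k) - x ^ k) with (x ^ k * (2 * (x * x) - 1)) by ring.
    rewrite hx. ring.
Qed.

Lemma Tch_bound x k : -1 <= x <= 1 -> Rabs (Tch x k) <= 1.
Proof.
  intros hx.
  destruct (Rlt_or_le (x * x) 1) as [hlt|hge].
  - destruct k as [|k].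
    + simpl. rewrite Rabs_R1. lra.
    + pose proof (Tch_inv x k) as H.
      set (a := Tch x (S k)) in *. set (b := Tch x k) in *.
      assert (a * a <= 1).
      { destruct (Rle_or_lt (a * a) 1) as [h|h]; [exact h|].
        exfalso. assert (0 <= (b - x * a) ^ 2) by apply pow2_ge_0.
        assert ((1 - x * x) * (a * a - 1) > 0) by (apply Rmult_lt_0_compat; lra).
        simpl in H. nra. }
      unfold Rabs; destruct (Rcase_abs a); nra.
  - assert (x * x = 1) by nra.
    destruct (Tch_pm x k H) as [h _]. rewrite h, <- RPow_abs.
    assert (Rabs x = 1) by (unfold Rabs; destruct (Rcase_abs x); nra).
    rewrite H0, pow1. lra.
Qed.

Lemma Tch_1 k : Tch 1 k = 1.
Proof. destruct (Tch_pm 1 k) as [h _]; [ring|]. rewrite h, pow1. reflexivity. Qed.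

Lemma PP_abs lam x n : 0 <= lam -> -1 <= x <= 1 -> Rabs (PP lam x n) <= PP lam 1 n.
Proof.
  intros hl hx. unfold PP. eapply Rle_trans; [apply Rsum_abs|].
  apply sum_Rle. intros j hj. rewrite Tch_1, Rmult_1_r.
  rewrite Rabs_mult. rewrite (Rabs_pos_eq (aa lam j * aa lam (n - j)))
    by (apply Rmult_le_pos; apply aa_nonneg; auto).
  pose proof (Tch_bound x (dst n (2 * j)) hx).
  pose proof (aa_nonneg lam j hl). pose proof (aa_nonneg lam (n - j) hl).
  assert (0 <= aa lam j * aa lam (n - j)) by (apply Rmult_le_pos; auto).
  nra.
Qed.

Fixpoint EE (m : nat) (n : nat) : R :=
  match n with O => 1 | S n' => EE m n' * (INR n' + INR m - 1) / (INR n' + 1) end.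

Lemma gegen_EE m n : (1 <= m)%nat -> gegen_pair ((INR m - 1) / 2) 1 n = (EE m n, EE m (S n)).
Proof.
  intros hm. induction n as [|n IH].
  - simpl. f_equal. field.
  - cbn [gegen_pair]. rewrite IH. f_equal.
    replace (INR (n + 2)) with (INR n + 2) by (rewrite plus_INR; simpl; ring).
    cbn [EE]. rewrite S_INR. pose proof (pos_INR n). field. lra.
Qed.

Lemma bern k y : 0 <= y -> y ^ k * (y + INR k + 1) <= (y + 1) ^ S k.
Proof.
  intros hy. induction k as [|k IH].
  - simpl. lra.
  - rewrite S_INR. change ((y + 1) ^ S (S k)) with ((y + 1) * (y + 1) ^ S k).
    change (y ^ S k) with (y * y ^ k).
    assert (0 <= y ^ k) by (apply pow_le; lra). pose proof (pos_INR k).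
    assert ((y + 1) * (y ^ k * (y + INR k + 1)) <= (y + 1) * (y + 1) ^ S k)
      by (apply Rmult_le_compat_l; lra).
    nra.
Qed.

Lemma EE_bound m n : (2 <= m)%nat -> 0 <= EE m n <= (INR n + 1) ^ (m - 2).
Proof.
  intros hm. induction n as [|n IH].
  - simpl. rewrite Rplus_0_l, pow1. lra.
  - cbn [EE]. pose proof (pos_INR n). assert (2 <= INR m) by (apply (le_INR 2); lia).
    destruct IH as [IH1 IH2].
    assert (0 <= (INR n + INR m - 1) / (INR n + 1))
      by (apply Rmult_le_pos; [lra| apply Rlt_le, Rinv_0_lt_compat; lra]).
    split; [unfold Rdiv in *; rewrite Rmult_assoc; apply Rmult_le_pos; lra|].
    rewrite S_INR.
    destruct (Nat.eq_dec m 2) as [e|e].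
    + subst m. simpl (2 - 2)%nat. simpl pow. simpl pow in IH2.
      replace (INR n + INR 2 - 1) with (INR n + 1) by (simpl; ring).
      unfold Rdiv. rewrite Rmult_assoc, Rinv_r by lra. lra.
    + replace (m - 2)%nat with (S (m - 3)) by lia.
      replace (m - 2)%nat with (S (m - 3)) in IH2 by lia.
      pose proof (bern (m - 3) (INR n + 1)) as B.
      replace (INR (m - 3)) with (INR m - 3) in B by (rewrite minus_INR by lia; simpl; ring).
      apply Rle_trans with ((INR n + 1) ^ S (m - 3) * ((INR n + INR m - 1) / (INR n + 1))).
      { unfold Rdiv. rewrite !Rmult_assoc. apply Rmult_le_compat_r; [|exact IH2].
        apply Rmult_le_pos; [lra| apply Rlt_le, Rinv_0_lt_compat; lra]. }
      change ((INR n + 1) ^ S (m - 3)) with ((INR n + 1) * (INR n + 1) ^ (m - 3)).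
      replace ((INR n + 1) * (INR n + 1) ^ (m - 3) * ((INR n + INR m - 1) / (INR n + 1)))
        with ((INR n + 1) ^ (m - 3) * (INR n + 1 + (INR m - 3) + 1)) by (field; lra).
      replace (INR n + 1 + 1) with (INR n + 1 + 1) by ring.
      apply B. lra.
Qed.

Lemma gegen_bound m l z : (2 <= m)%nat -> -1 <= z <= 1 ->
  Rabs (gegenbauer l ((INR m - 1) / 2) z) <= (INR l + 1) ^ (m - 2).
Proof.
  intros hm hz. assert (2 <= INR m) by (apply (le_INR 2); lia).
  unfold gegenbauer. rewrite gegen_PP. simpl fst.
  eapply Rle_trans; [apply PP_abs; [lra|exact hz]|].
  pose proof (gegen_PP ((INR m - 1) / 2) 1 l) as H1.
  rewrite gegen_EE in H1 by lia. injection H1 as H1 _. rewrite <- H1.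
  apply EE_bound; lia.
Qed.

Lemma num_bound l m : (2 <= l)%nat -> (2 <= m)%nat ->
  (2 * INR l + INR m - 1) / (INR m - 1) * (INR l + 1) ^ (m - 2)
  <= 2 ^ 7 * (INR l + INR m - 2) ^ (m + 1).
Proof.
  intros hl hm. assert (2 <= INR m) by (apply (le_INR 2); lia).
  assert (2 <= INR l) by (apply (le_INR 2); lia).
  set (N := INR l + INR m - 2).
  assert (HP : (INR l + 1) ^ (m - 2) <= N ^ (m - 2)).
  { destruct (Nat.eq_dec m 2) as [e|e].
    - subst m. simpl. lra.
    - apply pow_incr. assert (3 <= INR m) by (replace 3 with (INR 3) by (simpl; ring); apply le_INR; lia). unfold N. lra. }
  assert (HR : (2 * INR l + INR m - 1) / (INR m - 1) <= 2 * N + 1).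
  { apply Rmult_le_reg_r with (INR m - 1); [lra|].
    unfold Rdiv. rewrite Rmult_assoc, Rinv_l by lra. unfold N. nra. }
  replace (m + 1)%nat with ((m - 2) + 3)%nat by lia. rewrite pow_add.
  assert (0 <= N ^ (m - 2)) by (apply pow_le; unfold N; lra).
  assert (0 <= (INR l + 1) ^ (m - 2)) by (apply pow_le; lra).
  assert (0 <= (2 * INR l + INR m - 1) / (INR m - 1))
    by (apply Rmult_le_pos; [lra| apply Rlt_le, Rinv_0_lt_compat; lra]).
  assert (2 * N + 1 <= 2 ^ 7 * N ^ 3).
  { assert (2 <= N) by (unfold N; lra). assert (4 <= N * N) by nra.
    assert (4 * N <= N * N * N) by nra. simpl. lra. }
  apply Rle_trans with ((2 * N + 1) * N ^ (m - 2)).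
  { apply Rmult_le_compat; auto. }
  replace (2 ^ 7 * (N ^ (m - 2) * N ^ 3)) with ((2 ^ 7 * N ^ 3) * N ^ (m - 2)) by ring.
  apply Rmult_le_compat_r; auto.
Qed.

Lemma cc_bound m l t x y : (2 <= m)%nat -> -1 <= inner m x y <= 1 ->
  Rabs (cc m l t x y) <= exp (- (INR l * (INR l + INR m - 1)) * t / 2)
          * 2 ^ 7 * (INR l + INR m - 2) ^ (m + 1).
Proof.
  intros hm hz. assert (2 <= INR m) by (apply (le_INR 2); lia).
  pose proof (pos_INR l).
  assert (0 <= (INR l + INR m - 2) ^ (m + 1)) by (apply pow_le; lra).
  pose proof (exp_pos (- (INR l * (INR l + INR m - 1)) * t / 2)).
  unfold cc. destruct (Nat.even l && Nat.ltb 0 l)%bool eqn:E.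
  - assert (2 <= l)%nat.
    { destruct l as [|[|l]]; simpl in E; try discriminate; lia. }
    rewrite !Rabs_mult, Rabs_pos_eq by lra.
    rewrite (Rabs_pos_eq ((2 * INR l + INR m - 1) / (INR m - 1)))
      by (apply Rmult_le_pos; [lra| apply Rlt_le, Rinv_0_lt_compat; lra]).
    rewrite !Rmult_assoc. apply Rmult_le_compat_l; [lra|].
    eapply Rle_trans; [|apply num_bound; auto].
    apply Rmult_le_compat_l; [apply Rmult_le_pos; [lra| apply Rlt_le, Rinv_0_lt_compat; lra]|].
    apply gegen_bound; auto.
  - rewrite Rabs_R0. apply Rmult_le_pos; [apply Rmult_le_pos; lra|lra].
Qed.

Lemma inner_le n x y : 2 * Rabs (sum_f_R0 (fun i => x i * y i) n)
   <= sum_f_R0 (fun i => x i * x i) n + sum_f_R0 (fun i => y i * y i) n.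
Proof.
  assert (K : forall a b, 2 * Rabs (a * b) <= a * a + b * b)
    by (intros a b; pose proof (pow2_ge_0 (a - b)); pose proof (pow2_ge_0 (a + b));
        unfold Rabs; destruct (Rcase_abs (a*b)); simpl in *; nra).
  induction n as [|n IH]; simpl.
  - apply K.
  - pose proof (Rabs_triang (sum_f_R0 (fun i => x i * y i) n) (x (S n) * y (S n))).
    pose proof (K (x (S n)) (y (S n))). lra.
Qed.

Lemma inner_bound m x y : on_sphere m x -> on_sphere m y -> -1 <= inner m x y <= 1.
Proof.
  unfold on_sphere, inner. intros hx hy. pose proof (inner_le m x y) as H.
  rewrite hx, hy in H. unfold Rabs in H; destruct Rcase_abs in H; lra.
Qed.

Lemma exp_le a b : a <= b -> exp a <= exp b.
Proof. intros h. destruct (Rle_lt_or_eq_dec _ _ h) as [h'|h'].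
  - left; apply exp_increasing; exact h'. - subst; lra. Qed.

Lemma exp_pow a k : exp a ^ k = exp (INR k * a).
Proof.
  induction k as [|k IH].
  - simpl. rewrite Rmult_0_l, exp_0. reflexivity.
  - simpl pow. rewrite IH, S_INR, <- exp_plus. f_equal. ring.
Qed.

Lemma poly_exp y p eps : 0 <= y -> 0 < eps -> (1 <= p)%nat ->
  y ^ p <= (INR p / eps) ^ p * exp (eps * y).
Proof.
  intros hy he hp. assert (1 <= INR p) by (apply (le_INR 1); lia).
  replace y with ((INR p / eps) * (eps * y / INR p)) at 1 by (field; lra).
  rewrite Rpow_mult_distr. apply Rmult_le_compat_l.
  { apply pow_le. apply Rmult_le_pos; [lra| apply Rlt_le, Rinv_0_lt_compat; lra]. }
  replace (exp (eps * y)) with (exp (eps * y / INR p) ^ p) by (rewrite exp_pow; f_equal; field; lra).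
  apply pow_incr. split.
  - apply Rmult_le_pos; [nra| apply Rlt_le, Rinv_0_lt_compat; lra].
  - pose proof (exp_ineq1_le (eps * y / INR p)). lra.
Qed.

Definition Kc m t := 2 ^ 7 * (INR (m + 1) / (t / 2)) ^ (m + 1) * exp (t / 2 * (INR m - 2)).

Lemma cc_geom m l t x y : (2 <= m)%nat -> 0 < t -> -1 <= inner m x y <= 1 ->
  Rabs (cc m l t x y) <= Kc m t * exp (- t / 2) ^ l.
Proof.
  intros hm ht hz. assert (2 <= INR m) by (apply (le_INR 2); lia).
  pose proof (pos_INR l).
  eapply Rle_trans; [apply cc_bound; auto|].
  pose proof (poly_exp (INR l + INR m - 2) (m + 1) (t / 2)) as P.
  assert (P' : (INR l + INR m - 2) ^ (m + 1) <=
     (INR (m + 1) / (t / 2)) ^ (m + 1) * exp (t / 2 * (INR l + INR m - 2))) by (apply P; lra || lia).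
  pose proof (exp_pos (- (INR l * (INR l + INR m - 1)) * t / 2)).
  apply Rle_trans with (exp (- (INR l * (INR l + INR m - 1)) * t / 2) * 2 ^ 7 *
     ((INR (m + 1) / (t / 2)) ^ (m + 1) * exp (t / 2 * (INR l + INR m - 2)))).
  { apply Rmult_le_compat_l; [|exact P']. apply Rmult_le_pos; [lra| simpl; lra]. }
  unfold Kc. rewrite exp_pow.
  replace (exp (- (INR l * (INR l + INR m - 1)) * t / 2) * 2 ^ 7 *
     ((INR (m + 1) / (t / 2)) ^ (m + 1) * exp (t / 2 * (INR l + INR m - 2))))
   with (2 ^ 7 * (INR (m + 1) / (t / 2)) ^ (m + 1) *
         (exp (- (INR l * (INR l + INR m - 1)) * t / 2) * exp (t / 2 * (INR l + INR m - 2)))) by ring.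
  rewrite <- exp_plus. rewrite (Rmult_assoc (2 ^ 7 * _) (exp _) (exp _)), <- exp_plus.
  apply Rmult_le_compat_l.
  { apply Rmult_le_pos; [simpl; lra| apply pow_le, Rmult_le_pos; [apply pos_INR| apply Rlt_le, Rinv_0_lt_compat; lra]]. }
  apply exp_le.
  assert (0 <= INR l * (INR l + INR m - 3)).
  { destruct l as [|l]; [simpl; lra|]. rewrite S_INR. pose proof (pos_INR l). nra. }
  nra.
Qed.

Lemma norm_R (r : R) : norm r = Rabs r.
Proof. reflexivity. Qed.

Lemma ex_abs_cc m t x y : (2 <= m)%nat -> 0 < t -> -1 <= inner m x y <= 1 ->
  ex_series (fun l => Rabs (cc m l t x y)).
Proof.
  intros hm ht hz.
  apply (@ex_series_le R_AbsRing R_CompleteNormedModule _ (fun l => Kc m t * exp (- t / 2) ^ l)).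
  { intros n. rewrite norm_R, Rabs_Rabsolu. apply cc_geom; auto. }
  apply (ex_series_ext (fun l => scal (Kc m t) (exp (- t / 2) ^ l))); [reflexivity|].
  apply (@ex_series_scal R_AbsRing R_NormedModule). apply ex_series_geom.
  rewrite Rabs_pos_eq by (apply Rlt_le, exp_pos).
  rewrite <- exp_0. apply exp_increasing. lra.
Qed.

Lemma cc0 m t x y : cc m 0 t x y = 0.
Proof. reflexivity. Qed.
Lemma cc1 m t x y : cc m 1 t x y = 0.
Proof. reflexivity. Qed.
Lemma cc_lt2 m j t x y : (j < 2)%nat -> cc m j t x y = 0.
Proof. intros h. destruct j as [|[|j]]; [reflexivity|reflexivity|lia]. Qed.

Lemma dd_zero m n t x y : (n <= 3)%nat -> dd m n t x y = 0.
Proof.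
  intros h. unfold dd.
  destruct n as [|[|[|[|n]]]]; [| | | |lia]; simpl sum_f_R0; simpl Nat.sub;
  rewrite ?cc0, ?cc1; ring.
Qed.

Lemma hh_zero m k t x y : (k <= 5)%nat -> hh m k t x y = 0.
Proof.
  intros h. unfold hh.
  apply Rle_antisym; [|].
  all: rewrite (sum_eq _ (fun _ => 0)); [rewrite sum_cte; lra|].
  all: intros n hn; destruct (le_lt_dec n 3) as [h3|h3];
    [rewrite dd_zero by lia; ring| rewrite cc_lt2 by lia; ring].
Qed.

Lemma sum_count f n M : (forall j, (j <= n)%nat -> Rabs (f j) <= M) ->
  Rabs (sum_f_R0 f n) <= INR (S n) * M.
Proof.
  intros H. induction n as [|n IH].
  - simpl. rewrite Rmult_1_l. apply H. lia.
  - simpl sum_f_R0. rewrite S_INR.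
    pose proof (Rabs_triang (sum_f_R0 f n) (f (S n))).
    assert (Rabs (sum_f_R0 f n) <= INR (S n) * M) by (apply IH; intros; apply H; lia).
    pose proof (H (S n) (le_n _)). lra.
Qed.

Lemma count_bound n N k : INR n <= N -> 2 <= N ->
  INR (S n) * (N - 2) ^ S k <= N ^ S (S k).
Proof.
  intros h1 h2. rewrite S_INR.
  change ((N - 2) ^ S k) with ((N - 2) * (N - 2) ^ k).
  change (N ^ S (S k)) with (N * (N * N ^ k)).
  assert ((N - 2) ^ k <= N ^ k) by (apply pow_incr; lra).
  assert (0 <= (N - 2) ^ k) by (apply pow_le; lra).
  pose proof (pos_INR n).
  replace (N * (N * N ^ k)) with ((N * N) * N ^ k) by ring.
  replace ((INR n + 1) * ((N - 2) * (N - 2) ^ k)) with (((INR n + 1) * (N - 2)) * (N - 2) ^ k) by ring.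
  apply Rmult_le_compat; auto.
  - apply Rmult_le_pos; lra.
  - nra.
Qed.

Lemma prod_bound e1 e2 E k1 k2 A B C p q :
  0 <= e1 -> 0 <= e2 -> e1 * e2 <= E -> 0 <= k1 -> 0 <= k2 ->
  0 <= A <= C -> 0 <= B <= C ->
  (e1 * k1 * A ^ p) * (e2 * k2 * B ^ q) <= E * (k1 * k2) * C ^ (p + q).
Proof.
  intros. rewrite pow_add.
  replace ((e1 * k1 * A ^ p) * (e2 * k2 * B ^ q)) with ((e1 * e2) * (k1 * k2) * (A ^ p * B ^ q)) by ring.
  assert (A ^ p <= C ^ p) by (apply pow_incr; lra).
  assert (B ^ q <= C ^ q) by (apply pow_incr; lra).
  assert (0 <= A ^ p) by (apply pow_le; lra).
  assert (0 <= B ^ q) by (apply pow_le; lra).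
  apply Rmult_le_compat.
  - apply Rmult_le_pos; apply Rmult_le_pos; auto.
  - apply Rmult_le_pos; auto.
  - apply Rmult_le_compat_r; [apply Rmult_le_pos; auto|auto].
  - apply Rmult_le_compat; auto.
Qed.

Lemma dd_bound m n t x y : (2 <= m)%nat -> 0 < t -> -1 <= inner m x y <= 1 ->
  Rabs (dd m n t x y)
       <= exp (- (INR n ^ 2 / 2 + INR n * (INR m - 1)) * t / 2)
          * 2 ^ 14 * (INR n + INR m - 2) ^ (2 * m + 3).
Proof.
  intros hm ht hz. assert (2 <= INR m) by (apply (le_INR 2); lia).
  pose proof (pos_INR n).
  set (E := exp (- (INR n ^ 2 / 2 + INR n * (INR m - 1)) * t / 2)).
  assert (0 < E) by apply exp_pos.
  assert (P214 : 0 < 2 ^ 14) by (apply pow_lt; lra).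
  destruct (le_lt_dec n 3) as [h3|h3].
  { rewrite dd_zero by exact h3. rewrite Rabs_R0.
    apply Rmult_le_pos; [apply Rmult_le_pos; lra|apply pow_le; lra]. }
  set (N := INR n + INR m - 2).
  assert (4 <= INR n) by (replace 4 with (INR 4) by (simpl; ring); apply le_INR; lia).
  replace (2 * m + 3)%nat with (S (S (2 * m + 1))) by lia.
  apply Rle_trans with (INR (S n) * (E * 2 ^ 14 * (N - 2) ^ S (2 * m + 1))).
  2:{ replace (INR (S n) * (E * 2 ^ 14 * (N - 2) ^ S (2 * m + 1))) with
        (E * 2 ^ 14 * (INR (S n) * (N - 2) ^ S (2 * m + 1))) by ring.
      apply Rmult_le_compat_l; [lra|]. apply count_bound; unfold N; lra. }
  unfold dd. apply sum_count. intros j hj.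
  assert (0 <= (N - 2) ^ S (2 * m + 1)) by (apply pow_le; unfold N; lra).
  assert (0 <= E * 2 ^ 14 * (N - 2) ^ S (2 * m + 1))
    by (apply Rmult_le_pos; [apply Rmult_le_pos|]; lra).
  destruct (lt_dec j 2) as [hj2|hj2].
  { rewrite cc_lt2 by exact hj2. rewrite Rmult_0_l, Rabs_R0. lra. }
  destruct (lt_dec (n - j) 2) as [hj3|hj3].
  { rewrite (cc_lt2 m (n - j)) by exact hj3. rewrite Rmult_0_r, Rabs_R0. lra. }
  rewrite Rabs_mult.
  assert (INR j >= 2) by (apply Rle_ge; apply (le_INR 2); lia).
  assert (INR j <= INR n - 2) by (replace 2 with (INR 2) by reflexivity; rewrite <- minus_INR by lia; apply le_INR; lia).
  eapply Rle_trans.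
  { apply Rmult_le_compat; [apply Rabs_pos|apply Rabs_pos|apply cc_bound; auto|apply cc_bound; auto]. }
  replace (S (2 * m + 1)) with ((m + 1) + (m + 1))%nat by lia.
  replace (2 ^ 14) with (2 ^ 7 * 2 ^ 7) by (rewrite <- pow_add; reflexivity).
  rewrite minus_INR by lia.
  apply prod_bound.
  - apply Rlt_le, exp_pos.
  - apply Rlt_le, exp_pos.
  - unfold E. rewrite <- exp_plus. apply exp_le.
    assert (0 <= t * (2 * INR j - INR n) ^ 2) by (apply Rmult_le_pos; [lra|apply pow2_ge_0]).
    simpl in *. nra.
  - simpl; lra.
  - simpl; lra.
  - unfold N; lra.
  - unfold N; lra.
Qed.

Lemma hh_bound m k t x y : (2 <= m)%nat -> 0 < t -> -1 <= inner m x y <= 1 ->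
  Rabs (hh m k t x y)
       <= exp (- (INR k ^ 2 / 3 + INR k * (INR m - 1)) * t / 2)
          * 2 ^ 21 * (INR k + INR m - 2) ^ (3 * m + 5).
Proof.
  intros hm ht hz. assert (2 <= INR m) by (apply (le_INR 2); lia).
  pose proof (pos_INR k).
  set (E := exp (- (INR k ^ 2 / 3 + INR k * (INR m - 1)) * t / 2)).
  assert (0 < E) by apply exp_pos.
  assert (P221 : 0 < 2 ^ 21) by (apply pow_lt; lra).
  destruct (le_lt_dec k 5) as [h3|h3].
  { rewrite hh_zero by exact h3. rewrite Rabs_R0.
    apply Rmult_le_pos; [apply Rmult_le_pos; lra|apply pow_le; lra]. }
  set (N := INR k + INR m - 2).
  assert (6 <= INR k) by (replace 6 with (INR 6) by (simpl; ring); apply le_INR; lia).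
  replace (3 * m + 5)%nat with (S (S (3 * m + 3))) by lia.
  apply Rle_trans with (INR (S k) * (E * 2 ^ 21 * (N - 2) ^ S (3 * m + 3))).
  2:{ replace (INR (S k) * (E * 2 ^ 21 * (N - 2) ^ S (3 * m + 3))) with
        (E * 2 ^ 21 * (INR (S k) * (N - 2) ^ S (3 * m + 3))) by ring.
      apply Rmult_le_compat_l; [lra|]. apply count_bound; unfold N; lra. }
  unfold hh. apply sum_count. intros j hj.
  assert (0 <= (N - 2) ^ S (3 * m + 3)) by (apply pow_le; unfold N; lra).
  assert (0 <= E * 2 ^ 21 * (N - 2) ^ S (3 * m + 3))
    by (apply Rmult_le_pos; [apply Rmult_le_pos|]; lra).
  destruct (le_lt_dec j 3) as [hj2|hj2].
  { rewrite dd_zero by exact hj2. rewrite Rmult_0_l, Rabs_R0. lra. }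
  destruct (lt_dec (k - j) 2) as [hj3|hj3].
  { rewrite (cc_lt2 m (k - j)) by exact hj3. rewrite Rmult_0_r, Rabs_R0. lra. }
  rewrite Rabs_mult.
  assert (INR j >= 4) by (apply Rle_ge; replace 4 with (INR 4) by (simpl; ring); apply le_INR; lia).
  assert (INR j <= INR k - 2) by (replace 2 with (INR 2) by reflexivity; rewrite <- minus_INR by lia; apply le_INR; lia).
  eapply Rle_trans.
  { apply Rmult_le_compat; [apply Rabs_pos|apply Rabs_pos|apply dd_bound; auto|apply cc_bound; auto]. }
  replace (S (3 * m + 3)) with ((2 * m + 3) + (m + 1))%nat by lia.
  replace (2 ^ 21) with (2 ^ 14 * 2 ^ 7) by (rewrite <- pow_add; reflexivity).
  rewrite minus_INR by lia.
  apply prod_bound.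
  - apply Rlt_le, exp_pos.
  - apply Rlt_le, exp_pos.
  - unfold E. rewrite <- exp_plus. apply exp_le.
    assert (0 <= t * (3 * INR j - 2 * INR k) ^ 2) by (apply Rmult_le_pos; [lra|apply pow2_ge_0]).
    simpl in *. nra.
  - simpl; lra.
  - simpl; lra.
  - unfold N; lra.
  - unfold N; lra.
Qed.

Theorem lemma3p5 (m : nat) (Hm : (2 <= m)%nat) :
  (forall (l : nat) (t : R) (x y : nat -> R), 0 < t ->
     on_sphere m x -> on_sphere m y ->
     Rabs (cc m l t x y)
       <= exp (- (INR l * (INR l + INR m - 1)) * t / 2)
          * 2 ^ 7 * (INR l + INR m - 2) ^ (m + 1)) /\
  (forall (t : R) (x y : nat -> R), 0 < t ->
     on_sphere m x -> on_sphere m y ->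
     cc m 0 t x y = 0 /\ cc m 1 t x y = 0) /\
  (forall (t : R) (x y : nat -> R), 0 < t ->
     on_sphere m x -> on_sphere m y ->
     exists S : R,
       is_series (fun l => cc m l t x y) S /\
       is_series (fun n => dd m n t x y) (S ^ 2) /\
       is_series (fun k => hh m k t x y) (S ^ 3)) /\
  (forall (n : nat) (t : R) (x y : nat -> R), 0 < t ->
     on_sphere m x -> on_sphere m y ->
     Rabs (dd m n t x y)
       <= exp (- (INR n ^ 2 / 2 + INR n * (INR m - 1)) * t / 2)
          * 2 ^ 14 * (INR n + INR m - 2) ^ (2 * m + 3)) /\
  (forall (k : nat) (t : R) (x y : nat -> R), 0 < t ->
     on_sphere m x -> on_sphere m y ->
     Rabs (hh m k t x y)
       <= exp (- (INR k ^ 2 / 3 + INR k * (INR m - 1)) * t / 2)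
          * 2 ^ 21 * (INR k + INR m - 2) ^ (3 * m + 5)) /\
  (forall (n : nat) (t : R) (x y : nat -> R), 0 < t ->
     on_sphere m x -> on_sphere m y ->
     (n <= 3)%nat -> dd m n t x y = 0) /\
  (forall (k : nat) (t : R) (x y : nat -> R), 0 < t ->
     on_sphere m x -> on_sphere m y ->
     (k <= 5)%nat -> hh m k t x y = 0).
Proof.
  split; [intros; apply cc_bound; auto; apply inner_bound; auto|].
  split; [intros; split; reflexivity|].
  split.
  { intros t x y ht hx hy. pose proof (inner_bound m x y hx hy) as hz.
    pose proof (ex_abs_cc m t x y Hm ht hz) as Hc.
    set (c := fun l => cc m l t x y) in *.
    pose proof (Series_correct _ (ex_series_Rabs _ Hc)) as Hs.
    set (S := Series c) in *.
    exists S. split; [exact Hs|].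
    assert (Hd : is_series (fun n => dd m n t x y) (S * S)).
    { exact (is_series_mult c c S S Hs Hs Hc Hc). }
    assert (Hca : ex_series (fun n => Rabs (Rabs (c n)))).
    { apply (ex_series_ext (fun n => Rabs (c n))); [intros; rewrite Rabs_Rabsolu; reflexivity|exact Hc]. }
    assert (Had : ex_series (fun n => Rabs (dd m n t x y))).
    { apply (@ex_series_le R_AbsRing R_CompleteNormedModule _
               (fun n => sum_f_R0 (fun k => Rabs (c k) * Rabs (c (n - k)%nat)) n)).
      - intros n. rewrite norm_R, Rabs_Rabsolu. unfold dd.
        eapply Rle_trans; [apply Rsum_abs|]. apply sum_Rle. intros j _.
        rewrite Rabs_mult. apply Rle_refl.
      - eexists. apply (is_series_mult (fun n => Rabs (c n)) (fun n => Rabs (c n))).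
        + apply Series_correct. exact Hc.
        + apply Series_correct. exact Hc.
        + exact Hca.
        + exact Hca. }
    split.
    - replace (S ^ 2) with (S * S) by ring. exact Hd.
    - replace (S ^ 3) with ((S * S) * S) by ring.
      exact (is_series_mult (fun n => dd m n t x y) c (S * S) S Hd Hs Had Hc). }
  split; [intros; apply dd_bound; auto; apply inner_bound; auto|].
  split; [intros; apply hh_bound; auto; apply inner_bound; auto|].
  split; [intros; apply dd_zero; auto|].
  intros; apply hh_zero; auto.
Qed.
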